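(* Let $\Sigma\subset\mathbb{CH}^{n+1}$ be an $m$-dimensional submanifold that is $C^1$-asymptotically regular. If $m\ge2$ and $\Sigma$ is isotropic (i.e. the Kähler form $\omega_{\mathbb{CH}}(X,Y)=g_{\mathbb{CH}}(X,J_{\mathbb{CH}}Y)$ vanishes on $T\Sigma$), then $\Sigma$ is asymptotically horizontal.
   Context: Identify $\mathbb R^{2n+2}$ with $\mathbb C^{n+1}$ via $z_j=x_j+iy_j$; $r=|z|$; $\theta=r^{-2}\sum_j(x_jdy_j-y_jdx_j)$ on $\mathbb R^{2n+2}\setminus\{0\}$; $\mathbb B^{2n+2}$ the open unit ball, $\mathbb S^{2n+1}$ its boundary, $\hat\theta$ the pullback of $\theta$ to $\mathbb S^{2n+1}$; a submanifold $\Gamma\subset\mathbb S^{2n+1}$ is horizontal if $T_q\Gamma\subset\ker\hat\theta_q$ for all $q\in\Gamma$. $\mathbb{CH}^{n+1}$ is complex hyperbolic space (complete simply connected Kähler manifold of real dimension $2n+2$ with constant holomorphic sectional curvature, sectional curvatures in $[-4,-1]$), metric $g_{\mathbb{CH}}$, complex structure $J_{\mathbb{CH}}$. Bergman model: $\mathbb B^{2n+2}$ with $g_B=\frac{1}{1-r^2}\sum_jdz_jd\bar z_j+\frac{1}{(1-r^2)^2}\sum_{j,k}z_j\bar z_kdz_kd\bar z_j$ and the standard complex structure. For $p\in\mathbb{CH}^{n+1}$, $\Upsilon_p:\mathbb{CH}^{n+1}\to(\mathbb B^{2n+2},g_B)$ is an isometric biholomorphism with $\Upsilon_p(p)=0$,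 and $\Sigma_p=\overline{\Upsilon_p(\Sigma)}\subset\bar{\mathbb B}^{2n+2}$. $\Sigma$ is $C^l$-asymptotically regular if $\Sigma_p$ is a $C^l$ submanifold with boundary meeting $\partial\mathbb B^{2n+2}$ transversally; it is asymptotically horizontal if moreover $\partial\Sigma_p$ is a horizontal submanifold of $\mathbb S^{2n+1}$ (independent of choices). *)

(* Defs.v *)
(* R : realType, ambient space R^{2n+2} = 'rV[R]_(n.+1 + n.+1),
   first block = (x_0..x_n), second block = (y_0..y_n), z_j = x_j + i y_j. *)
From HB Require Import structures.
From mathcomp Require Import all_boot all_order all_algebra.
From mathcomp Require Import all_classical all_reals all_analysis.
Set Implicit Arguments. Unset Strict Implicit. Unset Printing Implicit Defensive.
Import Order.TTheory GRing.Theory Num.Theory.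
Import numFieldNormedType.Exports.
Local Open Scope classical_set_scope.
Local Open Scope ring_scope.

Section Defs.
Variables (R : realType) (n : nat).

Definition E := 'rV[R]_(n.+1 + n.+1).

Definition xc (v : E) : 'rV[R]_n.+1 := lsubmx v.
Definition yc (v : E) : 'rV[R]_n.+1 := rsubmx v.

(* standard complex structure: multiplication by i, (x,y) |-> (-y,x) *)
Definition Jst (v : E) : E := row_mx (- yc v) (xc v).

(* real and imaginary parts of the Hermitian product <a,b> = sum_j a_j conj(b_j) *)
Definition ReH (a b : E) : R :=
  \sum_(j < n.+1) (xc a ord0 j * xc b ord0 j + yc a ord0 j * yc b ord0 j).
Definition ImH (a b : E) : R :=
  \sum_(j < n.+1) (yc a ord0 j * xc b ord0 j - xc a ord0 j * yc b ord0 j).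

Definition r2 (z : E) : R := ReH z z.

Definition open_unit_ball : set E := [set z | r2 z < 1].
Definition unit_sphere : set E := [set z | r2 z = 1].

(* Bergman metric g_B at z : real part of
   (1/(1-r^2)) <X,Y> + (1/(1-r^2)^2) <X,z><z,Y> *)
Definition gB (z X Y : E) : R :=
  ReH X Y / (1 - r2 z)
  + (ReH X z * ReH z Y - ImH X z * ImH z Y) / (1 - r2 z) ^+ 2.

Definition kahler (z X Y : E) : R := gB z X (Jst Y).

(* contact form theta at q, applied to v:
   r^{-2} sum_j (x_j dy_j - y_j dx_j) *)
Definition theta (q v : E) : R := ImH v q / r2 q.

Fixpoint Ck (k : nat) (f : E -> E) (U : set E) : Prop :=
  match k with
  | 0 => {within U, continuous f}
  | k'.+1 => (forall x, U x -> differentiable f x) /\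
             (forall v : E, Ck k' (fun x => derive f x v) U)
  end.

Definition C1 (f : E -> E) (U : set E) : Prop := Ck 1 f U.
Definition Cinf (f : E -> E) (U : set E) : Prop := forall k, Ck k f U.

(* model: R^m x {0} (bd = false), or the half space
   {v_{m-1} >= 0} in R^m x {0} (bd = true) *)
Definition model_set (m : nat) (bd : bool) : set E :=
  [set v | (forall i : 'I_(n.+1 + n.+1), (m <= i)%N -> v ord0 i = 0) /\
           (bd -> forall i : 'I_(n.+1 + n.+1), i.+1 = m -> 0 <= v ord0 i)].

Definition chart (reg : (E -> E) -> set E -> Prop) (m : nat) (bd : bool)
    (S : set E) (q : E) (U : set E) (phi : E -> E) : Prop :=
  [/\ open U, U q, reg phi U, open (phi @` U) &
      [/\ (exists psi : E -> E, reg psi (phi @` U) /\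
             forall x, U x -> psi (phi x) = x),
          (forall x y, U x -> U y -> phi x = phi y -> x = y) &
          phi @` (U `&` S) = phi @` U `&` model_set m bd]].

Definition submanifold (reg : (E -> E) -> set E -> Prop) (m : nat) (bd : bool)
    (S : set E) : Prop :=
  forall q, S q -> exists U phi, chart reg m bd S q U phi.

Definition tangent (m : nat) (bd : bool) (S : set E) (q : E) : set E :=
  [set v | exists U phi, chart C1 m bd S q U phi /\
     forall i : 'I_(n.+1 + n.+1), (m <= i)%N -> derive phi q v ord0 i = 0].

Definition bd_point (m : nat) (S : set E) (q : E) : Prop :=
  S q /\ exists U phi, chart C1 m true S q U phi /\
     forall i : 'I_(n.+1 + n.+1), i.+1 = m -> phi q ord0 i = 0.

Definition bd_tangent (m : nat) (S : set E) (q : E) : set E :=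
  [set v | exists U phi, chart C1 m true S q U phi /\
     (forall i : 'I_(n.+1 + n.+1), i.+1 = m -> phi q ord0 i = 0) /\
     forall i : 'I_(n.+1 + n.+1), (m <= i.+1)%N -> derive phi q v ord0 i = 0].

(* Sigma (in the Bergman ball model, Upsilon_p = id for p = 0) is
   C^1-asymptotically regular: its closure is a C^1 submanifold with boundary,
   whose boundary is exactly its intersection with the sphere, meeting the
   sphere transversally *)
Definition asymp_regular_C1 (m : nat) (Sigma : set E) : Prop :=
  let S0 := closure Sigma in
  [/\ submanifold C1 m true S0,
      (forall q, S0 q -> (bd_point m S0 q <-> unit_sphere q)) &
      (forall q, S0 q -> unit_sphere q ->
         exists2 v, tangent m true S0 q v & ReH v q != 0)].

Definition horizontal_boundary (m : nat) (S0 : set E) : Prop :=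
  forall q, bd_point m S0 q -> forall v, bd_tangent m S0 q v -> theta q v = 0.

Definition asymp_horizontal (m : nat) (Sigma : set E) : Prop :=
  asymp_regular_C1 m Sigma /\ horizontal_boundary m (closure Sigma).

Definition isotropic (m : nat) (Sigma : set E) : Prop :=
  forall z, Sigma z -> forall X Y, tangent m false Sigma z X ->
    tangent m false Sigma z Y -> kahler z X Y = 0.

End Defs.

(* Main.v *)
Require Import Defs.
From HB Require Import structures.
From mathcomp Require Import all_boot all_order all_algebra.
From mathcomp Require Import all_classical all_reals all_analysis.
From mathcomp Require Import ring lra.
Set Implicit Arguments. Unset Strict Implicit. Unset Printing Implicit Defensive.
Import Order.TTheory GRing.Theory Num.Theory.
Import numFieldNormedType.Exports.
Local Open Scope classical_set_scope.
Local Open Scope ring_scope.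

Definition Vm (R : realType) (n m : nat) : set (E R n) :=
  [set v | forall i : 'I_(n.+1 + n.+1), (m <= i)%N -> v ord0 i = 0].

Lemma closed_Vm (R : realType) (n m : nat) : closed (@Vm R n m).
Proof.
have -> : @Vm R n m = \bigcap_(i in [set i : 'I_(n.+1 + n.+1) | (m <= i)%N])
   ((fun v : E R n => v ord0 i) @^-1` [set 0]).
  by apply/seteqP; split => v /= H i Hi; apply: H.
apply: closed_bigI => i _; apply: preimage_closed; last exact: closed_eq.
by move=> x _; apply: coord_continuous.
Qed.

Lemma at_right_sub (R : realType) (T : topologicalType) (g : R -> T) (l : T) :
  g @ (0:R)^' --> l -> g @ (0:R)^'+ --> l.
Proof.
move=> H; apply: cvg_trans H => P /=.
rewrite !near_simpl /= !near_withinE.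
apply: filter_app; near=> x => Hx /gt_eqF/negbT.
exact: Hx.
Unshelve. all: by end_near. Qed.

Lemma derive_in_closed (R : realType) (n : nat) (f : E R n -> E R n) a v (C : set (E R n)) :
  closed C -> derivable f a v ->
  (\forall h \near (0:R)^'+, C (h^-1 *: (f (h *: v + a) - f a))) -> C (derive f a v).
Proof.
move=> cC df HC.
have := at_right_sub df.
by apply: (closed_cvg _ cC).
Qed.
Lemma cvg_sumR (R : realType) (T : Type) (F : set_system T) (FF : Filter F)
  k (G : 'I_k -> T -> R) (a : 'I_k -> R) :
  (forall j, G j t @[t --> F] --> a j) ->
  (\sum_(j < k) G j t) @[t --> F] --> \sum_(j < k) a j.
Proof.
move=> H; elim: (index_enum _) => [|j s IH].
  rewrite big_nil; under eq_cvg do rewrite big_nil; exact: cvg_cst.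
rewrite big_cons; under eq_cvg do rewrite big_cons.
exact: cvgD.
Qed.

Lemma cvg_coord (R : realType) (n : nat) (T : Type) (F : set_system T) (FF : Filter F)
  (f : T -> E R n) (a : E R n) i : f t @[t --> F] --> a -> f t ord0 i @[t --> F] --> a ord0 i.
Proof.
move=> H; exact: (continuous_cvg _ (@coord_continuous R 1 _ ord0 i a) H).
Qed.

Lemma cvg_ReH (R : realType) (n : nat) (T : Type) (F : set_system T) (FF : Filter F)
  (f g : T -> E R n) (a b : E R n) : f t @[t --> F] --> a -> g t @[t --> F] --> b ->
  ReH (f t) (g t) @[t --> F] --> ReH a b.
Proof.
move=> Hf Hg; rewrite /ReH /xc /yc; under eq_cvg do rewrite /ReH /xc /yc.
apply: cvg_sumR => j; rewrite !mxE; under eq_cvg do rewrite !mxE.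
by apply: cvgD; apply: cvgM; apply: cvg_coord.
Qed.

Lemma cvg_ImH (R : realType) (n : nat) (T : Type) (F : set_system T) (FF : Filter F)
  (f g : T -> E R n) (a b : E R n) : f t @[t --> F] --> a -> g t @[t --> F] --> b ->
  ImH (f t) (g t) @[t --> F] --> ImH a b.
Proof.
move=> Hf Hg; rewrite /ImH /xc /yc; under eq_cvg do rewrite /ImH /xc /yc.
apply: cvg_sumR => j; rewrite !mxE; under eq_cvg do rewrite !mxE.
by apply: cvgB; apply: cvgM; apply: cvg_coord.
Qed.

Lemma ReH_J (R : realType) (n : nat) (a b : E R n) : ReH a (Jst b) = ImH a b.
Proof.
rewrite /ReH /ImH /Jst /xc /yc row_mxKl row_mxKr.
by apply: eq_bigr => j _; rewrite !mxE; ring.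
Qed.

Lemma ImH_J (R : realType) (n : nat) (a b : E R n) : ImH a (Jst b) = - ReH a b.
Proof.
rewrite /ReH /ImH /Jst /xc /yc row_mxKl row_mxKr -sumrN.
by apply: eq_bigr => j _; rewrite !mxE; ring.
Qed.

Lemma ReHC (R : realType) (n : nat) (a b : E R n) : ReH a b = ReH b a.
Proof. by rewrite /ReH; apply: eq_bigr => j _; ring. Qed.

Lemma ReH_dbl (R : realType) (n : nat) (a b : E R n) : ReH a (b + b) = 2 * ReH a b.
Proof.
rewrite /ReH /xc /yc mulr_sumr; apply: eq_bigr => j _; rewrite !mxE; ring.
Qed.

Lemma ReH_sq (R : realType) (n : nat) (k : R) (a b : E R n) :
  ReH (k *: (a - b)) (a + b) = k * (r2 a - r2 b).
Proof.
rewrite /r2 /ReH /xc /yc -sumrB mulr_sumr; apply: eq_bigr => j _; rewrite !mxE; ring.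
Qed.

Lemma line_cvg (R : realType) (n : nat) (w p : E R n) :
  (h *: w + p) @[h --> (0:R)] --> p.
Proof.
have H1 : (h *: w) @[h --> (0:R)] --> 0 *: w.
  by apply: cvgZr_tmp; exact: cvg_id.
have H := cvgD H1 (cvg_cst p).
by rewrite scale0r add0r in H; apply: H.
Qed.

Lemma derive_comp (R : realType) (n : nat) (f g : E R n -> E R n) x v :
  differentiable f x -> differentiable g (f x) ->
  derive (g \o f) x v = derive g (f x) (derive f x v).
Proof.
move=> df dg.
have h1 := deriveE v (differentiable_comp df dg).
have h2 := deriveE v df.
have h3 := diff_comp df dg.
have h4 := deriveE (derive f x v) dg.
rewrite h1.
rewrite h3.
rewrite h4 h2; reflexivity.
Qed.

Lemma chart_Cinf_C1 (R : realType) (n : nat) m bd (S : set (E R n)) q U phi :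
  chart (@Cinf R n) m bd S q U phi -> chart (@C1 R n) m bd S q U phi.
Proof.
case=> oU Uq Cphi oimg [[psi [Cpsi psiphi]] inj img].
split => //; first exact: (Cphi 1%N).
by split => //; exists psi; split => //; exact: (Cpsi 1%N).
Qed.

Lemma chart_at (R : realType) (n : nat) reg m bd (S : set (E R n)) q U phi x :
  chart reg m bd S q U phi -> U x -> chart reg m bd S x U phi.
Proof. by case=> oU Uq Cphi oimg H Ux; split. Qed.

Lemma chartP (R : realType) (n : nat) m bd (S : set (E R n)) q U phi :
  chart (@C1 R n) m bd S q U phi -> exists psi : E R n -> E R n,
  [/\ [/\ open U, U q, open (phi @` U),
         (forall x, U x -> differentiable phi x) &
         (forall x, U x -> differentiable psi (phi x))],
      (forall x, U x -> psi (phi x) = x),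
      (forall v, {in phi @` U, continuous (fun x => derive psi x v)}),
      (forall x, U x -> (S x <-> model_set m bd (phi x))) &
      (forall x v, U x -> derive psi (phi x) (derive phi x v) = v)].
Proof.
case=> oU Uq [Dphi _] oimg [[psi [[Dpsi Cpsi] psiphi]] inj img].
have Dpsi' : forall x, U x -> differentiable psi (phi x).
  by move=> x Ux; apply: Dpsi; exists x.
exists psi; split => //.
- move=> v; rewrite -continuous_open_subspace //; exact: (Cpsi v).
- move=> x Ux; split => [Sx|Mx].
    have : (phi @` (U `&` S)) (phi x) by exists x.
    by rewrite img => -[].
  have : (phi @` U `&` model_set m bd) (phi x) by split => //; exists x.
  rewrite -img => -[y [Uy Sy] /inj]; move=> /(_ Uy Ux) <-; exact: Sy.
- move=> x v Ux.
  have e1 : derive (psi \o phi) x v = derive psi (phi x) (derive phi x v).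
    exact: derive_comp (Dphi x Ux) (Dpsi' x Ux).
  rewrite -e1.
  have e2 : derive (psi \o phi) x v = derive id x v.
    apply: near_eq_derive.
    have : nbhs x U by apply: open_nbhs_nbhs; split.
    by apply: filterS => y Uy; rewrite /= psiphi.
  rewrite e2; exact: derive_id.
Qed.

Lemma closure_closed (T U : topologicalType) (H : T -> U) (C : set U) (S : set T) q :
  closed C -> {for q, continuous H} -> closure S q ->
  (\forall z \near q, S z -> C (H z)) -> C (H q).
Proof.
move=> cC Hc Sq Hn.
have -> : C = closure C by apply/closure_id.
move=> B nB.
have nB' : nbhs q (H @^-1` B) by exact: Hc.
have [z [Sz [Bz Cz]]] := Sq _ (filterI nB' Hn).
by exists (H z); split => //; apply: Cz.
Qed.

Lemma Vm_combo (R : realType) (n m : nat) (k l : R) (a b : E R n) :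
  Vm m a -> Vm m b -> Vm m (k *: a + l *: b).
Proof. by move=> Ha Hb i Hi; rewrite !mxE Ha // Hb // !mulr0 addr0. Qed.

Lemma deriv_model (R : realType) (n m : nat) (T : E R n -> E R n) p
    (i0 : 'I_(n.+1 + n.+1)) :
  i0.+1 = m -> differentiable T p -> model_set m true p -> Vm m (T p) ->
  (\forall y \near p, model_set m true y -> Vm m (T y)) ->
  forall w, Vm m w -> Vm m (derive T p w).
Proof.
move=> Hi0 dT [Mp1 Mp2] VTp Hn.
have step : forall u, Vm m u -> 0 <= u ord0 i0 -> Vm m (derive T p u).
  move=> u Vu u0.
  apply: derive_in_closed; first exact: closed_Vm.
    exact: diff_derivable.
  have H1 : \forall h \near (0:R), model_set m true (h *: u + p) -> Vm m (T (h *: u + p)).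
    exact: (@line_cvg R n u p _ Hn).
  rewrite near_withinE; apply: filterS H1 => h Hh hpos.
  have -> : h^-1 *: (T (h *: u + p) - T p) = h^-1 *: T (h *: u + p) + (- h^-1) *: T p.
    by rewrite scalerBr scaleNr.
  apply: Vm_combo => //; apply: Hh; split.
    by move=> i Hi; rewrite !mxE Vu // Mp1 // mulr0 addr0.
  move=> _ i Hi; rewrite !mxE.
  have -> : i = i0 by apply: val_inj; apply: succn_inj; rewrite Hi Hi0.
  apply: addr_ge0; last exact: (Mp2 isT i0 Hi0).
  by apply: mulr_ge0 => //; apply: ltW.
move=> w Vw.
pose e : E R n := \row_j ((j == i0)%:R).
pose c := `|w ord0 i0|.
have Ve : Vm m e.
  move=> i Hi; rewrite !mxE; case: eqP => // Ei; exfalso.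
  by move: Hi; rewrite Ei -Hi0 ltnn.
have e0 : 0 <= e ord0 i0 by rewrite !mxE eqxx.
have Vu1 : Vm m (1 *: w + c *: e) by apply: Vm_combo.
have u10 : 0 <= (1 *: w + c *: e) ord0 i0.
  rewrite !mxE eqxx mulr1 mul1r /c; have := ler_norm (- w ord0 i0); rewrite normrN; lra.
have D1 := step _ Vu1 u10.
have D2 := step _ Ve e0.
have -> : w = 1 *: (1 *: w + c *: e) + (- c) *: e.
  by rewrite !scale1r scaleNr addrK.
rewrite (deriveE _ dT) linearD !linearZ /= -(deriveE _ dT) -(deriveE _ dT).
exact: Vm_combo.
Qed.

Lemma near_right (R : realType) (P : R -> Prop) :
  (\forall h \near (0:R), P h) -> \forall h \near (0:R)^'+, P h.
Proof. by move=> H; rewrite near_withinE; apply: filterS H. Qed.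

Lemma alg_lem (R : realType) (d I a b c e : R) : d != 0 ->
  I / d + (a * b - c * - e) / d ^+ 2 = 0 -> d * I + (a * b + c * e) = 0.
Proof.
move=> dz K.
have -> : d * I + (a * b + c * e) = d ^+ 2 * (I / d + (a * b - c * - e) / d ^+ 2).
  by field.
by rewrite K mulr0.
Qed.

Unset Implicit Arguments.

Theorem lemma3p2 (R : realType) (n m : nat) (Sigma : set (E R n)) :
  Sigma `<=` open_unit_ball (n:=n) ->
  (m <= n.+1 + n.+1)%N ->
  submanifold (@Cinf R n) m false Sigma ->
  asymp_regular_C1 m Sigma ->
  (2 <= m)%N ->
  isotropic m Sigma ->
  asymp_horizontal m Sigma.
Proof.
move=> Hball Hm Hsub Hreg H2m Hiso.
split; first exact: Hreg.
case: Hreg => Hs0 Hbd Htr.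
move=> q Hbdq X [U [phi [Hch [Hphiq HX]]]].
have S0q : closure Sigma q by case: Hbdq.
have sq : r2 q = 1 by have := (Hbd q S0q).1 Hbdq.
rewrite /theta sq divr1.
have Hi0 : (m.-1 < n.+1 + n.+1)%N by rewrite prednK ?(leq_trans _ H2m).
pose i0 := Ordinal Hi0.
have Hi0m : i0.+1 = m by rewrite /= prednK // (leq_trans _ H2m).
have [psi [[oU Uq oimg Dphi Dpsi] psiphi Cpsi SM Did]] := chartP Hch.
pose p0 := phi q.
have ii0 : forall i : 'I_(n.+1 + n.+1), i.+1 = m -> i = i0.
  by move=> i Hi; apply: val_inj; apply: succn_inj; rewrite Hi Hi0m.
have [Mq1 _] := (SM q Uq).1 S0q.
pose wX := derive phi q X.
have VwX : Vm m wX by move=> i Hi; apply: HX; exact: leqW.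
have wXi0 : wX ord0 i0 = 0 by apply: HX; rewrite Hi0m.
have p0i0 : p0 ord0 i0 = 0 by apply: Hphiq.
have [v Tv Rv] := Htr q S0q sq.
case: Tv => U2 [phi2 [Hch2 Hv]].
have [psi2 [[oU2 U2q oimg2 Dphi2 Dpsi2] psiphi2 _ SM2 Did2]] := chartP Hch2.
pose wY := derive phi q v.
have VwY : Vm m wY.
  rewrite /wY -{1}(Did2 q v U2q) -{1}(psiphi2 q U2q).
  have Dc : differentiable (phi \o psi2) (phi2 q).
    by apply: differentiable_comp; [exact: Dpsi2 | rewrite psiphi2 //; exact: Dphi].
  rewrite -(derive_comp _ (Dpsi2 q U2q)); last by rewrite psiphi2 //; exact: Dphi.
  apply: (deriv_model Hi0m Dc) => //.
  - exact: ((SM2 q U2q).1 S0q).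
  - by rewrite /= psiphi2 //; case: ((SM q Uq).1 S0q).
  - have n1 : nbhs (phi2 q) (phi2 @` U2) by apply: open_nbhs_nbhs; split => //; exists q.
    have n2 : nbhs (phi2 q) (psi2 @^-1` U).
      have c : psi2 x @[x --> phi2 q] --> psi2 (phi2 q).
        exact: differentiable_continuous (Dpsi2 q U2q).
      rewrite psiphi2 // in c; apply: c.
      by apply: open_nbhs_nbhs; split.
    apply: filterS (filterI n1 n2) => y [[x U2x <-] Ux] My.
    rewrite /= psiphi2 // in Ux *.
    have S0x := (SM2 x U2x).2 My.
    by case: ((SM x Ux).1 S0x).
have n0 : nbhs p0 (phi @` U) by apply: open_nbhs_nbhs; split => //; exists q.
have cpsi0 : psi x @[x --> p0] --> q.
  have c : psi x @[x --> p0] --> psi p0.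
    exact: differentiable_continuous (Dpsi q Uq).
  by rewrite /p0 psiphi in c.
have ReX : ReH X q = 0.
  pose Q := fun h : R => h^-1 *: ((psi \o shift p0) (h *: wX) - psi p0).
  pose S := fun h : R => psi (h *: wX + p0) + psi p0.
  have cQ : Q h @[h --> (0:R)^'+] --> X.
    apply: at_right_sub.
    have := diff_derivable (v:=wX) (Dpsi q Uq).
    rewrite /derivable => /cvgP.
    suff -> : lim (Q h @[h --> (0:R)^']) = X by [].
    rewrite -[RHS](Did q X Uq); reflexivity.
  have cS : S h @[h --> (0:R)^'+] --> q + q.
    apply: cvgD; last by rewrite /p0 psiphi //; exact: cvg_cst.
    apply: cvg_at_right_filter.
    exact: (cvg_comp _ _ (@line_cvg R n wX p0) cpsi0).
  have L := cvg_ReH _ cQ cS.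
  have Z : ReH X (q + q) = 0.
    have CC := @closed_cvg R R (0:R)^'+ _ (fun h => ReH (Q h) (S h)) [set x | x = 0] (@closed_eq R 0).
    apply: (CC _ _ _ (L _)).
    have N1 : \forall h \near (0:R), (phi @` U) (h *: wX + p0).
      exact: (@line_cvg R n wX p0 _ n0).
    apply: near_right; apply: filterS N1 => h [x Ux Ex].
    have Mx : model_set m true (phi x).
      rewrite Ex; split.
        by move=> i Hi; rewrite !mxE VwX // Mq1 // mulr0 addr0.
      by move=> _ i Hi; rewrite (ii0 i Hi) !mxE wXi0 p0i0 mulr0 addr0.
    have S0x := (SM x Ux).2 Mx.
    have bdx : bd_point m (closure Sigma) x.
      split => //; exists U, phi; split; first exact: chart_at Hch Ux.
      by move=> i Hi; rewrite Ex (ii0 i Hi) !mxE wXi0 p0i0 mulr0 addr0.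
    have sx : r2 x = 1 by have := (Hbd x S0x).1 bdx.
    rewrite /= /Q /S.
    change (ReH (h^-1 *: (psi (h *: wX + p0) - psi p0)) (psi (h *: wX + p0) + psi p0) = 0).
    by rewrite ReH_sq -Ex psiphi // sx /p0 psiphi // sq subrr mulr0.
  by move: Z; rewrite ReH_dbl => /eqP; rewrite mulf_eq0 pnatr_eq0 /= => /eqP.
have TB : forall z w, Sigma z -> U z -> Vm m w ->
    tangent m false Sigma z (derive psi (phi z) w).
  move=> z w Sz Uz Vw.
  have [U' [phi' Hch']] := Hsub z Sz.
  have Hch1 := chart_Cinf_C1 Hch'.
  exists U', phi'; split => //.
  have [psi' [[oU' U'z oimg' Dphi' Dpsi'] psiphi' _ SM' _]] := chartP Hch1.
  have S0z : closure Sigma z by apply: subset_closure.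
  have Dc : differentiable (phi' \o psi) (phi z).
    by apply: differentiable_comp; [exact: Dpsi | rewrite psiphi //; exact: Dphi'].
  rewrite -{1}(psiphi z Uz) -(derive_comp _ (Dpsi z Uz)); last first.
    by rewrite psiphi //; exact: Dphi'.
  apply: (deriv_model Hi0m Dc) => //.
  - exact: ((SM z Uz).1 S0z).
  - by rewrite /= psiphi //; case: ((SM' z U'z).1 Sz).
  - have n1 : nbhs (phi z) (phi @` U) by apply: open_nbhs_nbhs; split => //; exists z.
    have n2 : nbhs (phi z) (psi @^-1` U').
      have c : psi x @[x --> phi z] --> psi (phi z).
        exact: differentiable_continuous (Dpsi z Uz).
      rewrite psiphi // in c; apply: c.
      by apply: open_nbhs_nbhs; split.
    apply: filterS (filterI n1 n2) => y [[x Ux <-] U'x] My.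
    rewrite /= psiphi // in U'x *.
    have S0x := (SM x Ux).2 My.
    apply: (@closure_closed _ _ phi' (@Vm R n m) Sigma x (@closed_Vm R n m) _ S0x).
      exact: differentiable_continuous (Dphi' x U'x).
    have n3 : nbhs x U' by apply: open_nbhs_nbhs; split.
    apply: filterS n3 => y' U'y Sy.
    by case: ((SM' y' U'y).1 Sy).
pose Dx := fun y : E R n => (derive psi y wX : E R n).
pose Dy := fun y : E R n => (derive psi y wY : E R n).
pose G := fun y => (1 - r2 (psi y)) * ImH (Dx y) (Dy y) +
  (ReH (Dx y) (psi y) * ImH (psi y) (Dy y) + ImH (Dx y) (psi y) * ReH (psi y) (Dy y)).
have pU : p0 \in phi @` U by apply: mem_set; exists q.
have cDx : Dx y @[y --> p0] --> Dx p0.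
  by have := Cpsi wX p0 pU; rewrite /continuous_at /Dx => H; apply: H.
have cDy : Dy y @[y --> p0] --> Dy p0.
  by have := Cpsi wY p0 pU; rewrite /continuous_at /Dy => H; apply: H.
have cps : psi y @[y --> p0] --> psi p0 by rewrite /p0 psiphi.
have cG : G y @[y --> p0] --> G p0.
  have a1 : r2 (psi y) @[y --> p0] --> r2 (psi p0) by exact: (cvg_ReH _ cps cps).
  have a2 : (1 - r2 (psi y)) @[y --> p0] --> 1 - r2 (psi p0).
    have c1 := cvgB (@cvg_cst _ (1:R) _ (nbhs p0) _) a1. exact: c1.
  have a3 : ImH (Dx y) (Dy y) @[y --> p0] --> ImH (Dx p0) (Dy p0) by exact: (cvg_ImH _ cDx cDy).
  have a4 : ReH (Dx y) (psi y) @[y --> p0] --> ReH (Dx p0) (psi p0) by exact: (cvg_ReH _ cDx cps).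
  have a5 : ImH (psi y) (Dy y) @[y --> p0] --> ImH (psi p0) (Dy p0) by exact: (cvg_ImH _ cps cDy).
  have a6 : ImH (Dx y) (psi y) @[y --> p0] --> ImH (Dx p0) (psi p0) by exact: (cvg_ImH _ cDx cps).
  have a7 : ReH (psi y) (Dy y) @[y --> p0] --> ReH (psi p0) (Dy p0) by exact: (cvg_ReH _ cps cDy).
  have b1 := cvgM a2 a3.
  have b2 := cvgM a4 a5.
  have b3 := cvgM a6 a7.
  have Fp : Filter (nbhs p0) by apply: nbhs_filter.
  have b2' := b2 Fp. have b3' := b3 Fp. have b1' := b1 Fp.
  have b4 := cvgD b2' b3'.
  have b5 := cvgD b1' (b4 Fp).
  exact: b5.
have G0 : G p0 = 0.
  apply: (@closure_closed _ _ (G \o phi) [set x | x = 0] Sigma q (@closed_eq R 0) _ S0q).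
    apply: continuous_comp; first exact: differentiable_continuous (Dphi q Uq).
    exact: cG.
  have n3 : nbhs q U by apply: open_nbhs_nbhs; split.
  apply: filterS n3 => z Uz Sz.
  have K := Hiso z Sz _ _ (TB z wX Sz Uz VwX) (TB z wY Sz Uz VwY).
  move: K; rewrite /kahler /gB !ReH_J !ImH_J /= /G /Dx /Dy psiphi // => K.
  have rz : r2 z < 1 by exact: (Hball z Sz).
  have dz : 1 - r2 z != 0 by rewrite subr_eq0 eq_sym lt_eqF.
  exact: (alg_lem dz K).
move: G0; rewrite /G /Dx /Dy /p0 psiphi // !Did // sq subrr mul0r add0r ReX mul0r add0r.
move=> /eqP; rewrite mulf_eq0 => /orP [/eqP //|].
by rewrite ReHC (negbTE Rv).
Qed.
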